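(* Let $k\subset K$ be a finite field extension such that Waring's problem holds in $k$. Then $k^+\subseteq\overline{N}_{K/k}$.
   Context: $N_{K/k}:K\to k$ is the field norm. $\overline{N}_{K/k}\subseteq k$ denotes the additive closure of the image of the norm, i.e. the set of all finite sums $\sum_i N_{K/k}(a_i)$ with $a_i\in K$ (including $0$). An element $a\in k$ is totally positive if $a>0$ in every ordering of $k$ (if $k$ has no orderings, every element is totally positive); $k^+$ denotes the set of totally positive elements of $k$ together with $0$. Waring's problem holds in $k$ if for every exponent $d\ge1$ there is a finite bound $g(k,d)$ such that every totally positive element of $k$ is a sum of at most $g(k,d)$ $d$-th powers of elements of $k$. *)

(* Defs.v *)
From HB Require Import structures.
From mathcomp Require Import all_boot all_order all_algebra all_field.
Set Implicit Arguments. Unset Strict Implicit. Unset Printing Implicit Defensive.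
Import GRing.Theory.
Local Open Scope ring_scope.

(* An ordering of a field k, given by its positive cone P = {x | x >= 0}:
   closed under + and *, P u -P = k, P n -P = {0}. *)
Definition is_ordering (k : fieldType) (P : k -> Prop) : Prop :=
  [/\ (forall x y, P x -> P y -> P (x + y)),
      (forall x y, P x -> P y -> P (x * y)),
      (forall x, P x \/ P (- x)) &
      (forall x, P x -> P (- x) -> x = 0)].

Definition pos_in (k : fieldType) (P : k -> Prop) (a : k) : Prop := P a /\ a <> 0.

(* a is totally positive: positive in every ordering of k
   (vacuously true if k has no orderings). *)
Definition totally_positive (k : fieldType) (a : k) : Prop :=
  forall P : k -> Prop, is_ordering P -> pos_in P a.

Definition tot_pos0 (k : fieldType) (a : k) : Prop :=
  totally_positive a \/ a = 0.

Definition waring_holds (k : fieldType) : Prop :=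
  forall d : nat, (1 <= d)%N -> exists g : nat, forall a : k, totally_positive a ->
    exists s : seq k, (size s <= g)%N /\ a = \sum_(x <- s) x ^+ d.

Definition field_norm (k : fieldType) (K : fieldExtType k) (a : K) : k :=
  \det (passmx.mxof (vbasis {:K}) (vbasis {:K}) (amull a)).

(* Additive closure of the image of the norm: finite sums of norms (incl. 0). *)
Definition norm_sums (k : fieldType) (K : fieldExtType k) (a : k) : Prop :=
  exists s : seq K, a = \sum_(x <- s) field_norm x.

(* Main.v *)
Require Import Defs.
From HB Require Import structures.
From mathcomp Require Import all_boot all_order all_algebra all_field.
Import GRing.Theory.
Local Open Scope ring_scope.
Lemma normA (k : fieldType) (K : fieldExtType k) (c : k) :
  field_norm (c%:A : K) = c ^+ \dim {:K}.
Proof.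
rewrite /field_norm.
have -> : amull (c%:A : K) = c *: \1%VF.
  by rewrite -(amull1 K) -linearZ.
rewrite -[c *: _]addr0 passmx.mxof_linear.
have hb := vbasisP (fullv : {vspace K}).
rewrite (_ : passmx.mxof _ _ 0 = 0) ?addr0; last first.
  by apply/eqP; rewrite (passmx.mxof_eq0 hb hb).
rewrite passmx.mxof1 ?(basis_free hb) //.
by rewrite scalemx1 det_scalar.
Qed.
Theorem mainTheorem6 (k : fieldType) (K : fieldExtType k) :
  waring_holds k -> forall a : k, tot_pos0 a -> norm_sums K a.
Proof.
move=> W a [Ha|->]; last by exists [::]; rewrite big_nil.
have [g Hg] := W (\dim {:K}) (adim_gt0 (fullv : {aspace K})).
have [s [_ ->]] := Hg a Ha.
exists [seq (x%:A : K) | x <- s]; rewrite big_map.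
by apply: eq_bigr => x _; rewrite normA.
Qed.
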